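(* Let $p,q\in(0,1)$, let $x,y,k$ be natural numbers and $N,T$ be positive integers. Then $$\mathbb{P}^{(x,y)}_{p,q}(Z_T\ge kN)\ge\gamma^{*a}([k,+\infty)),$$ where $a=\min(\lfloor x/N\rfloor,\lfloor y/N\rfloor)$ and $\gamma$ is the law of $\lfloor Z_T/N\rfloor$ under $\mathbb{P}^{(N,N)}_{p,q}$ (with the convention $\gamma^{*0}=\delta_0$).
   Context: Cooperative model: for $p,q\in(0,1)$, a Markov chain $(X_n,Y_n)_{n\ge0}$ on $\mathbb{N}^2$ whose transition law from state $(x,y)$ is $\mu_{(x,y)}=\mathrm{Bin}(2,q)^{*(x+y)}\otimes\mathrm{Bin}(2,p)^{*\min(x,y)}$, i.e. given the past, $X_{n+1}\sim\mathrm{Bin}(2(X_n+Y_n),q)$ and $Y_{n+1}\sim\mathrm{Bin}(2\min(X_n,Y_n),p)$ are independent. $\mathbb{P}^{(x,y)}_{p,q}$ denotes the law of this process started from $(x,y)$. $Z_n=\min(X_n,Y_n)$. *)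

(* Defs.v *)
(* probabilities as values in an abstract R : realType
   (only finite sums are needed since binomial laws have finite support). *)
From mathcomp Require Import all_boot all_order all_algebra.
From mathcomp Require Import reals.
Set Implicit Arguments. Unset Strict Implicit. Unset Printing Implicit Defensive.
Import Order.TTheory GRing.Theory Num.Theory.
Local Open Scope ring_scope.

Definition binpmf (R : realType) (n : nat) (r : R) (i : nat) : R :=
  ('C(n, i))%:R * r ^+ i * (1 - r) ^+ (n - i).

(* chain_expect p q n x y f = E^{(x,y)}_{p,q}[ f(X_n, Y_n) ] for the
   cooperative model: X_{n+1} ~ Bin(2(X_n+Y_n), q), Y_{n+1} ~ Bin(2 min(X_n,Y_n), p)
   independent given the past; computed by first-step (Markov) analysis. *)
Fixpoint chain_expect (R : realType) (p q : R) (n x y : nat)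
    (f : nat -> nat -> R) {struct n} : R :=
  match n with
  | 0 => f x y
  | n'.+1 =>
      \sum_(i < (2 * (x + y)).+1) \sum_(j < (2 * minn x y).+1)
        binpmf (2 * (x + y)) q i * binpmf (2 * minn x y) p j
        * chain_expect p q n' i j f
  end.

Definition chain_prob (R : realType) (p q : R) (n x y : nat)
    (E : nat -> nat -> bool) : R :=
  chain_expect p q n x y (fun u v => (E u v)%:R).

(* gamma = law of floor(Z_T / N) under P^{(N,N)}_{p,q}, Z = min(X,Y).
   gamma_conv_tail p q N T a k = gamma^{*a}([k, +oo)), i.e. the probability
   that a sum of a i.i.d. gamma-distributed variables is >= k, with
   gamma^{*0} = delta_0.  Recursion: P(G + S >= k) = E[ P(S >= k - G) ]
   (truncated subtraction, since P(S >= 0) = 1). *)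
Fixpoint gamma_conv_tail (R : realType) (p q : R) (N T a k : nat) {struct a} : R :=
  match a with
  | 0 => (k == 0%N)%:R
  | a'.+1 =>
      chain_expect p q T N N
        (fun u v => gamma_conv_tail p q N T a' (k - minn u v %/ N))
  end.

(* Main.v *)
Require Import Defs.
From mathcomp Require Import all_boot all_order all_algebra.
From mathcomp Require Import reals.
From mathcomp Require Import ring lra zify.
Import Order.TTheory GRing.Theory Num.Theory.
Local Open Scope ring_scope.
Set Implicit Arguments. Unset Strict Implicit.

Definition Ebin (R : realType) (m : nat) (r : R) (h : nat -> R) : R :=
  \sum_(i < m.+1) binpmf m r i * h i.

Lemma binpmf_ge0 (R : realType) (r : R) m i : 0 <= r <= 1 -> 0 <= binpmf m r i.
Proof.
move=> /andP[r0 r1]; rewrite /binpmf.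
by rewrite !mulr_ge0 // ?ler0n // exprn_ge0 // subr_ge0.
Qed.

Lemma binpmf_small (R : realType) (r : R) m i : (m < i)%N -> binpmf m r i = 0.
Proof. by move=> h; rewrite /binpmf bin_small // !mul0r. Qed.

Lemma binpmf_S0 (R : realType) (r : R) m : binpmf m.+1 r 0 = (1 - r) * binpmf m r 0.
Proof. by rewrite /binpmf !bin0 !subn0 exprS; ring. Qed.

Lemma binpmf_SS (R : realType) (r : R) m i :
  binpmf m.+1 r i.+1 = r * binpmf m r i + (1 - r) * binpmf m r i.+1.
Proof.
rewrite /binpmf binS natrD subSS.
have [lt|ge] := ltnP i m.
  rewrite -(subnSK lt) !exprS.
  move: (_%:R) (_%:R) (r ^+ i) (_ ^+ (m - i.+1)) => a b c d. ring.
rewrite (bin_small (n:=m)) ?ltnS // exprS; ring.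
Qed.

Lemma Ebin_ext (R : realType) (r : R) m h1 h2 :
  (forall i, h1 i = h2 i) -> Ebin m r h1 = Ebin m r h2.
Proof. by move=> e; apply: eq_bigr => i _; rewrite e. Qed.

Lemma Ebin_le (R : realType) (r : R) m h1 h2 : 0 <= r <= 1 ->
  (forall i, h1 i <= h2 i) -> Ebin m r h1 <= Ebin m r h2.
Proof.
move=> hr e; apply: ler_sum => i _; apply: ler_wpM2l; first exact: binpmf_ge0.
exact: e.
Qed.

Lemma Ebin0 (R : realType) (r : R) h : Ebin 0 r h = h 0%N.
Proof. by rewrite /Ebin big_ord_recl big_ord0 /binpmf bin0 !expr0 addr0 !mul1r. Qed.

Lemma Ebin_S (R : realType) (r : R) m h :
  Ebin m.+1 r h = Ebin m r (fun i => (1 - r) * h i + r * h i.+1).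
Proof.
rewrite /Ebin big_ord_recl.
have o0 : nat_of_ord (@ord0 m.+1) = 0%N by [].
rewrite o0 (eq_bigr (fun i : 'I_m.+1 => binpmf m.+1 r i.+1 * h i.+1)); last first.
  by move=> i _; rewrite lift0.
rewrite binpmf_S0.
under eq_bigr do rewrite binpmf_SS mulrDl.
rewrite big_split /=.
under [RHS]eq_bigr do rewrite mulrDr.
rewrite [RHS]big_split /=.
have E : \sum_(i < m.+2) (1 - r) * binpmf m r i * h i =
   (1 - r) * binpmf m r 0 * h 0%N + \sum_(i < m.+1) (1 - r) * binpmf m r i.+1 * h i.+1.
  by rewrite big_ord_recl; congr (_ + _); apply: eq_bigr => i _; rewrite lift0.
have E2 : \sum_(i < m.+2) (1 - r) * binpmf m r i * h i =
   \sum_(i < m.+1) (1 - r) * binpmf m r i * h i.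
  by rewrite big_ord_recr /= binpmf_small // mulr0 mul0r addr0.
rewrite addrCA addrC; congr (_ + _); last by apply: eq_bigr => i _; ring.
rewrite (_ : \sum_(i < m.+1) binpmf m r i * ((1 - r) * h i) =
   \sum_(i < m.+2) (1 - r) * binpmf m r i * h i); last first.
  by rewrite E2; apply: eq_bigr => i _; ring.
by rewrite E.
Qed.

Lemma Ebin_const (R : realType) (r : R) m c : Ebin m r (fun _ => c) = c.
Proof.
elim: m => [|m IH]; first by rewrite Ebin0.
rewrite Ebin_S -[RHS]IH; apply: Ebin_ext => i; ring.
Qed.

Lemma Ebin_swap (R : realType) (r s : R) m k (F : nat -> nat -> R) :
  Ebin m r (fun i => Ebin k s (fun j => F i j)) =
  Ebin k s (fun j => Ebin m r (fun i => F i j)).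
Proof.
rewrite /Ebin; under eq_bigr do rewrite mulr_sumr.
rewrite exchange_big; apply: eq_bigr => j _; rewrite mulr_sumr.
by apply: eq_bigr => i _; ring.
Qed.

Lemma Ebin_conv (R : realType) (r : R) m2 m1 h :
  Ebin m1 r (fun i1 => Ebin m2 r (fun i2 => h (i1 + i2)%N)) = Ebin (m1 + m2) r h.
Proof.
elim: m2 m1 h => [|m2 IH] m1 h.
  by rewrite addn0; apply: Ebin_ext => i; rewrite Ebin0 addn0.
rewrite addnS Ebin_S -IH; apply: Ebin_ext => i; rewrite Ebin_S.
by apply: Ebin_ext => j; rewrite addnS.
Qed.

Definition mono1 (R : realType) (h : nat -> R) := forall i j, (i <= j)%N -> h i <= h j.
Definition mono2 (R : realType) (f : nat -> nat -> R) :=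
  forall u u' v v', (u <= u')%N -> (v <= v')%N -> f u v <= f u' v'.

Lemma Ebin_mono_le (R : realType) (r : R) m m' h : 0 <= r <= 1 -> mono1 h ->
  (m <= m')%N -> Ebin m r h <= Ebin m' r h.
Proof.
move=> hr hh /subnK <-; elim: (m' - m)%N => [|d IH]; first by rewrite add0n.
apply: le_trans IH _; rewrite addSn Ebin_S; apply: Ebin_le => // i.
case/andP: hr => r0 r1.
rewrite [X in X <= _](_ : h i = (1 - r) * h i + r * h i); last by ring.
by rewrite lerD2l ler_wpM2l // hh.
Qed.

Lemma Ebin_mono (R : realType) (r : R) m (F : nat -> nat -> R) : 0 <= r <= 1 ->
  (forall j, mono1 (fun i => F i j)) -> mono1 (fun i => Ebin m r (F i)).
Proof. by move=> hr hF i i' le; apply: Ebin_le => // j; apply: hF. Qed.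


Lemma ce_S (R : realType) (p q : R) n x y f :
  chain_expect p q n.+1 x y f = Ebin (2 * (x + y)) q
    (fun i => Ebin (2 * minn x y) p (fun j => chain_expect p q n i j f)).
Proof.
rewrite /Ebin /=; apply: eq_bigr => i _; rewrite mulr_sumr.
by apply: eq_bigr => j _; ring.
Qed.

Lemma ce_ext (R : realType) (p q : R) n x y f g :
  (forall u v, f u v = g u v) -> chain_expect p q n x y f = chain_expect p q n x y g.
Proof.
move=> e; elim: n x y => [|n IH] x y; first exact: e.
by rewrite !ce_S; apply: Ebin_ext => i; apply: Ebin_ext => j; apply: IH.
Qed.

Lemma ce_le (R : realType) (p q : R) n x y f g : 0 <= p <= 1 -> 0 <= q <= 1 ->
  (forall u v, f u v <= g u v) -> chain_expect p q n x y f <= chain_expect p q n x y g.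
Proof.
move=> hp hq e; elim: n x y => [|n IH] x y; first exact: e.
by rewrite !ce_S; apply: Ebin_le => // i; apply: Ebin_le => // j; apply: IH.
Qed.

Lemma ce_const (R : realType) (p q : R) n x y c :
  chain_expect p q n x y (fun _ _ => c) = c.
Proof.
elim: n x y => [|n IH] x y //; rewrite ce_S.
rewrite (Ebin_ext _ _ (h2 := fun _ => c)) ?Ebin_const // => i.
by rewrite (Ebin_ext _ _ (h2 := fun _ => c)) ?Ebin_const.
Qed.

Lemma ce_Ebin (R : realType) (p q r : R) n x y m (F : nat -> nat -> nat -> R) :
  chain_expect p q n x y (fun u v => Ebin m r (F u v)) =
  Ebin m r (fun i => chain_expect p q n x y (fun u v => F u v i)).
Proof.
elim: n x y => [|n IH] x y //; rewrite ce_S.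
rewrite (Ebin_ext _ _ (h2 := fun i' => Ebin (2 * minn x y) p (fun j' =>
   Ebin m r (fun i => chain_expect p q n i' j' (fun u v => F u v i))))); last first.
  by move=> i'; apply: Ebin_ext => j'; apply: IH.
rewrite (Ebin_ext _ _ (h2 := fun i' => Ebin m r (fun i => Ebin (2 * minn x y) p (fun j' =>
   chain_expect p q n i' j' (fun u v => F u v i))))); last first.
  by move=> i'; apply: Ebin_swap.
rewrite Ebin_swap; apply: Ebin_ext => i; by rewrite ce_S.
Qed.

Lemma ce_mono (R : realType) (p q : R) n f : 0 <= p <= 1 -> 0 <= q <= 1 ->
  mono2 f -> mono2 (fun x y => chain_expect p q n x y f).
Proof.
move=> hp hq hf; elim: n => [|n IH] // u u' v v' hu hv.
rewrite !ce_S.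
apply: (le_trans (y := Ebin (2 * (u + v)) q (fun i => Ebin (2 * minn u' v') p
   (fun j => chain_expect p q n i j f)))).
  apply: Ebin_le => // i; apply: Ebin_mono_le => //; last by lia.
  by move=> j j' hj; apply: IH.
apply: Ebin_mono_le => //; last by lia.
by apply: Ebin_mono => // j i i' hi; apply: IH.
Qed.

Lemma coupling (R : realType) (p q : R) n : 0 <= p <= 1 -> 0 <= q <= 1 ->
  forall x1 y1 x2 y2 g, mono2 g ->
  chain_expect p q n x1 y1 (fun u1 v1 =>
     chain_expect p q n x2 y2 (fun u2 v2 => g (u1 + u2)%N (v1 + v2)%N))
  <= chain_expect p q n (x1 + x2) (y1 + y2) g.
Proof.
move=> hp hq; elim: n => [|n IH] x1 y1 x2 y2 g hg; first by [].
set M1 := (2 * (x1 + y1))%N; set K1 := (2 * minn x1 y1)%N.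
set M2 := (2 * (x2 + y2))%N; set K2 := (2 * minn x2 y2)%N.
set K := (2 * minn (x1 + x2) (y1 + y2))%N.
have gm := ce_mono n hp hq hg.
apply: (le_trans (y := Ebin M1 q (fun i1 => Ebin K1 p (fun j1 =>
   Ebin M2 q (fun i2 => Ebin K2 p (fun j2 =>
     chain_expect p q n (i1 + i2) (j1 + j2) g)))))).
  rewrite ce_S; apply: Ebin_le => // i1; apply: Ebin_le => // j1.
  rewrite (ce_ext _ _ _ _ _ (g := fun u1 v1 => Ebin M2 q (fun i2 => Ebin K2 p
     (fun j2 => chain_expect p q n i2 j2 (fun u2 v2 => g (u1 + u2)%N (v1 + v2)%N))))); last first.
    by move=> u v; rewrite ce_S.
  rewrite ce_Ebin; apply: Ebin_le => // i2.
  rewrite ce_Ebin; apply: Ebin_le => // j2.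
  exact: IH.
rewrite (Ebin_ext _ _ (h2 := fun i1 => Ebin M2 q (fun i2 => Ebin K1 p (fun j1 =>
     Ebin K2 p (fun j2 => chain_expect p q n (i1 + i2) (j1 + j2) g))))); last first.
  by move=> i1; rewrite Ebin_swap.
rewrite (Ebin_ext _ _ (h2 := fun i1 => Ebin M2 q (fun i2 =>
     Ebin (K1 + K2) p (fun j => chain_expect p q n (i1 + i2) j g)))); last first.
  by move=> i1; apply: Ebin_ext => i2; rewrite (Ebin_conv p K2 K1 (fun j => chain_expect p q n (i1 + i2) j g)).
apply: (le_trans (y := Ebin M1 q (fun i1 => Ebin M2 q (fun i2 =>
     Ebin K p (fun j => chain_expect p q n (i1 + i2) j g))))).
  apply: Ebin_le => // i1; apply: Ebin_le => // i2; apply: Ebin_mono_le => //.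
    by move=> j j' hj; apply: gm.
  rewrite /K /K1 /K2; lia.
rewrite (Ebin_conv q M2 M1 (fun i => Ebin K p (fun j => chain_expect p q n i j g))).
rewrite ce_S /M1 /M2 /K.
have -> : (2 * (x1 + y1) + 2 * (x2 + y2) = 2 * (x1 + x2 + (y1 + y2)))%N by lia.
by [].
Qed.

Lemma ev_mono (R : realType) (K : nat) :
  mono2 (fun u v => (((K <= minn u v)%N : bool)%:R : R)).
Proof.
move=> u u' v v' hu hv /=; case h: (K <= minn u v)%N; last by rewrite ler0n.
by have -> : (K <= minn u' v')%N by lia.
Qed.

Lemma main_ind (R : realType) (p q : R) (N T : nat) : 0 <= p <= 1 -> 0 <= q <= 1 ->
  forall a k x y, (a * N <= x)%N -> (a * N <= y)%N ->
  gamma_conv_tail p q N T a k <=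
  chain_prob p q T x y (fun u v => (k * N <= minn u v)%N).
Proof.
move=> hp hq; elim=> [|a IH] k x y hx hy.
  rewrite /chain_prob /=; case: k => [|k].
    by rewrite (ce_ext _ _ _ _ _ (g := fun _ _ => 1)) ?ce_const.
  have -> : (((k.+1 == 0)%N : bool)%:R : R) = 0 by [].
  by rewrite -(ce_const p q T x y 0); apply: ce_le => // u v; rewrite ler0n.
have hxN : (N <= x)%N by move: hx; rewrite mulSn; lia.
have hyN : (N <= y)%N by move: hy; rewrite mulSn; lia.
have hx' : (a * N <= x - N)%N by move: hx; rewrite mulSn; lia.
have hy' : (a * N <= y - N)%N by move: hy; rewrite mulSn; lia.
rewrite /= /chain_prob -(subnKC hxN) -(subnKC hyN).
apply: (le_trans (y := chain_expect p q T N N (fun u1 v1 =>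
   chain_expect p q T (x - N) (y - N) (fun u2 v2 =>
     (((k * N <= minn (u1 + u2) (v1 + v2))%N : bool)%:R : R))))); last first.
  by apply: coupling => //; apply: ev_mono.
apply: ce_le => // u1 v1.
apply: le_trans (IH _ _ _ hx' hy') _.
rewrite /chain_prob; apply: ce_le => // u2 v2.
case h: ((k - minn u1 v1 %/ N) * N <= minn u2 v2)%N; last by rewrite ler0n.
have hf := leq_trunc_div (minn u1 v1) N.
move: h hf; rewrite mulnBl.
move: (minn u1 v1 %/ N * N)%N => F.
move: (k * N)%N => K h hf.
by have -> : (K <= minn (u1 + u2) (v1 + v2))%N by lia.
Qed.

Theorem lemma2 (R : realType) (p q : R) (x y k N T : nat) :
  0 < p < 1 -> 0 < q < 1 -> (0 < N)%N -> (0 < T)%N ->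
  gamma_conv_tail p q N T (minn (x %/ N) (y %/ N)) k
    <= chain_prob p q T x y (fun u v => (k * N <= minn u v)%N).
Proof.
move=> /andP[p0 p1] /andP[q0 q1] hN hT.
apply: main_ind.
- by rewrite ltW // ltW.
- by rewrite ltW // ltW.
- apply: leq_trans (leq_trunc_div x N); rewrite leq_mul2r geq_minl orbT //.
- apply: leq_trans (leq_trunc_div y N); rewrite leq_mul2r geq_minr orbT //.
Qed.
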